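(* Let $X$ be an FK-space containing $\phi$. Then $\phi\subseteq D_p^qS\subseteq D_p^qW\subseteq D_p^qF\subseteq D_p^qB\subseteq X$ and $\phi\subseteq D_p^qS\subseteq D_p^qW\subseteq\overline{\phi}$, where all these subspaces are computed in $X$ and $\overline{\phi}$ is the closure of $\phi$ in $X$.
   Context: An FK-space is a vector subspace of the space $w$ of all complex sequences with a complete metrizable locally convex topology in which coordinate functionals are continuous; $X'$ is its continuous dual. $\delta^j$ has $1$ in position $j$, $0$ elsewhere; $\phi=\operatorname{span}\{\delta^j\}$. $p(n)<q(n)$ are nonnegative integer sequences with $q(n)\to\infty$. For $x\in w$, $x^{(k)}=\sum_{j=1}^kx_j\delta^j$ and $T_n(x)=\frac{1}{q(n)-p(n)}\sum_{k=p(n)+1}^{q(n)}x^{(k)}$, so $f(T_n(x))=\frac{1}{q(n)-p(n)}\sum_{k=p(n)+1}^{q(n)}\sum_{j=1}^kx_jf(\delta^j)$. Subspaces: $D_p^qS=\{x\in X: T_n(x)\to x \text{ in } X\}$; $D_p^qW=\{x\in X: f(T_n(x))\to f(x)\ \forall f\in X'\}$; $D_p^qF^+=\{x\in w: \lim_n f(T_n(x))\text{ exists }\forall f\in X'\}$; $D_p^qB^+=\{x\in w:\sup_n|f(T_n(x))|<\infty\ \forall f\in X'\}$; $D_p^qF=D_p^qF^+\cap X$; $D_p^qB=D_p^qB^+\cap X$. *)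

(* Defs.v *)
From HB Require Import structures.
From mathcomp Require Import all_boot all_order all_algebra.
From mathcomp Require Import all_classical all_reals all_analysis.
From mathcomp Require Import complex.
Set Implicit Arguments. Unset Strict Implicit. Unset Printing Implicit Defensive.
Import Order.TTheory GRing.Theory Num.Theory.
Import numFieldTopology.Exports numFieldNormedType.Exports.
Local Open Scope classical_set_scope.
Local Open Scope ring_scope.

Notation Ctop R := ((R[i])^o) (only parsing).

(* The space w of all complex sequences; indices are 0-based here:
   the paper's coordinate x_j (j >= 1) is [x (j-1)]. *)
Definition wseq (R : realType) := nat -> R[i].

Definition delta (R : realType) (j : nat) : wseq R := fun i => (i == j)%:R.
Arguments delta R j : clear implicits.

Definition phi (R : realType) : set (wseq R) :=
  [set x | exists (N : nat) (c : nat -> R[i]),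
     forall i, x i = \sum_(j < N) c j * delta R j i].
Arguments phi R : clear implicits.

(* k-th section x^(k) = sum_{paper j = 1..k} x_j delta^j, i.e. the first k
   coordinates of x. *)
Definition section (R : realType) (k : nat) (x : wseq R) : wseq R :=
  fun i => if (i < k)%N then x i else 0.

(* T_n(x) = 1/(q n - p n) * sum_{k = p n + 1}^{q n} x^(k). *)
Definition Tn (R : realType) (p q : nat -> nat) (n : nat) (x : wseq R) : wseq R :=
  fun i => ((q n - p n)%:R)^-1 * \sum_(p n <= k < q n) section k.+1 x i.

Definition complete_metric_for (R : realType) (V : tvsType R[i])
    (d : V -> V -> R) : Prop :=
  [/\ (forall x y, 0 <= d x y) /\ (forall x y, d x y = 0 <-> x = y),
      forall x y, d x y = d y x,
      forall x y z, d x z <= d x y + d y z,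
      forall (x : V) (A : set V),
        nbhs x A <-> (exists2 e : R, 0 < e & [set y | d x y < e] `<=` A) &
      forall u : nat -> V,
        (forall e : R, 0 < e -> exists N : nat, forall m n : nat,
            (N <= m)%N -> (N <= n)%N -> d (u m) (u n) < e) ->
        exists v : V, u @ \oo --> v].

(* An FK-space is represented by a locally convex topological vector space V
   over C (tvsType = locally convex tvs) together with a linear injection
   iota : V -> w; the FK-space (as a subspace of w) is X = range iota, with
   the topology transported from V. *)
Definition FKspace (R : realType) (V : tvsType R[i]) (iota : V -> wseq R) : Prop :=
  [/\ injective iota,
      forall (a : R[i]) (u v : V) (i : nat),
        iota (a *: u + v) i = a * iota u i + iota v i,
      (exists d : V -> V -> R, complete_metric_for d) &
      forall j : nat, continuous (fun v : V => (iota v j : Ctop R))].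

Definition inX (R : realType) (V : tvsType R[i]) (iota : V -> wseq R) : set (wseq R) :=
  range iota.

(* For x in w, "f (T_n x)" is f applied to the (unique, by injectivity)
   element u n of V with iota (u n) = T_n x (which exists as phi <= X). *)

Definition DS (R : realType) (V : tvsType R[i]) (iota : V -> wseq R)
    (p q : nat -> nat) : set (wseq R) :=
  [set x | exists (v : V) (u : nat -> V), iota v = x /\
     (forall n, iota (u n) = Tn p q n x) /\ u @ \oo --> v].

Definition DW (R : realType) (V : tvsType R[i]) (iota : V -> wseq R)
    (p q : nat -> nat) : set (wseq R) :=
  [set x | exists (v : V) (u : nat -> V), iota v = x /\
     (forall n, iota (u n) = Tn p q n x) /\
     forall f : {scalar V}, continuous (f : V -> Ctop R) ->
       (fun n => (f (u n) : Ctop R)) @ \oo --> (f v : Ctop R)].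

Definition DFplus (R : realType) (V : tvsType R[i]) (iota : V -> wseq R)
    (p q : nat -> nat) : set (wseq R) :=
  [set x | exists u : nat -> V,
     (forall n, iota (u n) = Tn p q n x) /\
     forall f : {scalar V}, continuous (f : V -> Ctop R) ->
       cvg ((fun n => (f (u n) : Ctop R)) @ \oo)].

Definition DBplus (R : realType) (V : tvsType R[i]) (iota : V -> wseq R)
    (p q : nat -> nat) : set (wseq R) :=
  [set x | exists u : nat -> V,
     (forall n, iota (u n) = Tn p q n x) /\
     forall f : {scalar V}, continuous (f : V -> Ctop R) ->
       exists M : R[i], forall n, `|f (u n)| <= M].

Definition DF (R : realType) (V : tvsType R[i]) (iota : V -> wseq R)
    (p q : nat -> nat) : set (wseq R) := DFplus iota p q `&` inX iota.

Definition DB (R : realType) (V : tvsType R[i]) (iota : V -> wseq R)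
    (p q : nat -> nat) : set (wseq R) := DBplus iota p q `&` inX iota.

Definition phi_closure (R : realType) (V : tvsType R[i]) (iota : V -> wseq R)
    : set (wseq R) := iota @` closure (iota @^-1` phi R).

(* Main.v *)
Require Import Defs.
From HB Require Import structures.
From mathcomp Require Import all_boot all_order all_algebra.
From mathcomp Require Import all_classical all_reals all_analysis.
From mathcomp Require Import complex.
Import Order.TTheory GRing.Theory Num.Theory.
Import numFieldTopology.Exports numFieldNormedType.Exports.
Local Open Scope classical_set_scope.
Local Open Scope ring_scope.
From mathcomp Require Import ring lra.
Local Notation rs t x := (((t%:C)%C : _[i]) *: x).

Section RS.
Variables (R : realType) (V : lmodType R[i]).
Implicit Types (s t : R) (x y : V).
Lemma rsA s t x : rs s (rs t x) = rs (s * t) x.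
Proof. by rewrite scalerA rmorphM. Qed.
Lemma rsD s t x : rs s x + rs t x = rs (s + t) x.
Proof. by rewrite -scalerDl rmorphD. Qed.
Lemma rs1 x : rs 1 x = x.
Proof. by rewrite rmorph1 scale1r. Qed.
Lemma rs0 x : rs 0 x = 0.
Proof. by rewrite rmorph0 scale0r. Qed.
Lemma rsN1 x : rs (-1) x = - x.
Proof. by rewrite rmorphN1 scaleN1r. Qed.
Lemma rsDr t x y : rs t (x + y) = rs t x + rs t y.
Proof. by rewrite scalerDr. Qed.
Lemma rsN t x : rs t (- x) = - rs t x.
Proof. by rewrite scalerN. Qed.
Lemma rsNl t x : rs (- t) x = - rs t x.
Proof. by rewrite rmorphN scaleNr. Qed.
End RS.
Section HBext.
Variables (R : realType) (V : lmodType R[i]) (p : V -> R).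
Hypothesis p_add : forall x y, p (x + y) <= p x + p y.
Hypothesis p_hom : forall (t : R) x, 0 < t -> p (rs t x) = t * p x.

Definition Qg (G : set (V * R)) :=
 [/\ forall x a b, G (x,a) -> G (x,b) -> a = b,
     forall x a y b, G (x,a) -> G (y,b) -> G (x+y, a+b),
     forall t x a, G (x,a) -> G (rs t x, t*a) &
     forall x a, G (x,a) -> a <= p x].

Lemma Qg00 A : Qg A -> A !=set0 -> A (0, 0).
Proof.
case=> _ _ HZ _ [[x a] Ax]; have := HZ 0 _ _ Ax.
by rewrite rs0 mul0r.
Qed.

Lemma step (A : set (V * R)) y : Qg A -> A !=set0 -> ~ (exists a, A (y, a)) ->
  exists A', Qg A' /\ A `<` A'.
Proof.
move=> QA An ny; have A00 := @Qg00 A QA An.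
case: QA => Af AD AZ Ap.
pose E := [set r | exists x a, A (x, a) /\ r = a - p (x - y)].
have ubE z b : A (z, b) -> ubound E (p (z + y) - b).
  move=> Azb _ [x [a [Axa ->]]].
  have := Ap _ _ (AD _ _ _ _ Axa Azb).
  have := p_add (x - y) (z + y).
  have -> : x - y + (z + y) = x + z by rewrite addrACA addNr addr0.
  lra.
have hsE : has_sup E.
  split; first by exists (0 - p (0 - y)), 0, 0.
  by exists (p (0 + y) - 0); exact: ubE.
pose c := sup E.
have c_ge x a : A (x, a) -> a - p (x - y) <= c.
  by move=> Axa; apply: sup_upper_bound => //; exists x, a.
have c_le z b : A (z, b) -> c <= p (z + y) - b.
  by move=> Azb; apply: ge_sup; [case: hsE|exact: ubE].
pose A' := [set e | exists x a t, A (x, a) /\ e = (x + rs t y, a + t * c)].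
exists A'; split; last first.
  split.
    move=> [x a] Axa; exists x, a, 0; split => //.
    by rewrite rs0 addr0 mul0r addr0.
  move=> AA; apply: ny; exists c; apply: AA; exists 0, 0, 1; split => //.
  by rewrite rs1 add0r mul1r add0r.
have AN x a : A (x, a) -> A (- x, - a).
  by move=> Axa; have := AZ (-1) _ _ Axa; rewrite rsN1 mulN1r.
split.
- move=> e a1 a2 [x [a [t [Axa [-> ->]]]]] [x' [a' [t' [Axa' [ex ->]]]]].
  have tt' : t = t'.
    apply: contrapT => /eqP; rewrite -subr_eq0 => tt0.
    apply: ny; exists ((t - t')^-1 * (a' - a)).
    have := AZ ((t - t')^-1) _ _ (AD _ _ _ _ Axa' (AN _ _ Axa)).
    suff -> : rs (t - t')^-1 (x' + - x) = y by [].
    have -> : x' + - x = rs (t - t') y.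
      rewrite -rsD rsNl.
      have -> : x' = x + rs t y - rs t' y by rewrite ex addrK.
      by rewrite addrAC [x + _]addrC addrK.
    by rewrite rsA mulVf // rs1.
  subst t'; have xx' : x = x' by move: ex => /addIr.
  subst x'; by rewrite (Af _ _ _ Axa Axa').
- move=> e a1 e' a2 [x [a [t [Axa [-> ->]]]]] [x' [a' [t' [Axa' [-> ->]]]]].
  exists (x + x'), (a + a'), (t + t'); split; first exact: AD.
  congr (_, _); last by ring.
  by rewrite -rsD addrACA.
- move=> s e a1 [x [a [t [Axa [-> ->]]]]].
  exists (rs s x), (s * a), (s * t); split; first exact: AZ.
  congr (_, _); last by ring.
  by rewrite rsDr rsA.
- move=> e a1 [x [a [t [Axa [-> ->]]]]].
  case: (ltgtP t 0) => [t0|t0|->]; last first.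
  + by rewrite rs0 addr0 mul0r addr0; exact: Ap.
  +
    have := c_le _ _ (AZ t^-1 _ _ Axa).
    have := p_hom t (rs t^-1 x + y) t0.
    rewrite rsDr rsA mulfV ?gt_eqF // rs1 => ->.
    move=> h; have : t * c <= t * (p (rs t^-1 x + y) - t^-1 * a).
      by rewrite ler_pM2l.
    rewrite mulrBr mulrA mulfV ?gt_eqF // mul1r; lra.
  +
    have s0 : 0 < - t by rewrite oppr_gt0.
    have := c_ge _ _ (AZ (- t)^-1 _ _ Axa).
    have := p_hom (- t) (rs (- t)^-1 x - y) s0.
    rewrite rsDr rsA mulfV ?gt_eqF // rs1 rsN rsNl opprK => ->.
    move=> h; have : (- t) * ((- t)^-1 * a - p (rs (- t)^-1 x - y)) <= (- t) * c.
      by rewrite ler_pM2l.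
    rewrite mulrBr mulrA mulfV ?gt_eqF // mul1r; lra.
Qed.


Lemma hb_ext (G0 : set (V * R)) : Qg G0 -> G0 !=set0 ->
  exists g : V -> R, [/\ forall x y, g (x + y) = g x + g y,
    forall t x, g (rs t x) = t * g x, forall x, g x <= p x &
    forall x a, G0 (x, a) -> g x = a].
Proof.
move=> QG0 G0n.
pose P := fun G : set (V * R) => G = set0 \/ (Qg G /\ G0 `<=` G).
have [A [PA Amax]] : exists A, P A /\ forall B, A `<` B -> ~ P B.
  apply: Zorn_bigcup => F FP Ftot.
  case: (pselect (exists X, F X /\ X !=set0)) => [[X [FX Xn]]|nF]; last first.
    left; apply/seteqP; split => // e [X FX Xe]; apply: nF; exists X; split => //.
    by exists e.
  right.
  have QZ Z e : F Z -> Z e -> Qg Z /\ G0 `<=` Z.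
    move=> FZ Ze; case: (FP Z FZ) => // Z0.
    by move: Ze; rewrite Z0.
  have two e1 e2 : (\bigcup_(X in F) X) e1 -> (\bigcup_(X in F) X) e2 ->
      exists Z, [/\ F Z, Qg Z, Z e1 & Z e2].
    move=> [X1 F1 X1e] [X2 F2 X2e]; case: (Ftot _ _ F1 F2) => sub.
      exists X2; split => //; [exact: (QZ _ _ F2 X2e).1|exact: sub].
    exists X1; split => //; [exact: (QZ _ _ F1 X1e).1|exact: sub].
  split; last first.
    move=> e G0e; case: Xn => e' Xe'; exists X => //.
    exact: (QZ _ _ FX Xe').2 _ G0e.
  split.
  - move=> x a b h1 h2; have [Z [FZ [Zf _ _ _] Z1 Z2]] := two _ _ h1 h2.
    exact: Zf _ _ _ Z1 Z2.
  - move=> x a y b h1 h2; have [Z [FZ [_ ZD _ _] Z1 Z2]] := two _ _ h1 h2.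
    by exists Z => //; exact: ZD.
  - move=> t x a [Z FZ Ze]; have [[_ _ ZZ _] _] := QZ _ _ FZ Ze.
    by exists Z => //; exact: ZZ.
  - move=> x a [Z FZ Ze]; have [[_ _ _ Zp] _] := QZ _ _ FZ Ze.
    exact: Zp.
have [QA G0A] : Qg A /\ G0 `<=` A.
  case: PA => // A0; exfalso; apply: (Amax G0); last by right; split.
  rewrite A0; split => // h; case: G0n => e G0e; exact: (h e G0e).
have An : A !=set0 by case: G0n => e G0e; exists e; exact: G0A.
have tot x : exists a, A (x, a).
  apply: contrapT => nx; have [A' [QA' AA']] := @step A x QA An nx.
  apply: (Amax A' AA'); right; split => //.
  exact: subset_trans G0A (properW AA').
pose g x := projT1 (cid (tot x)).
have gP x : A (x, g x) by rewrite /g; case: cid.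
case: QA => Af AD AZ Ap.
exists g; split.
- by move=> x y; apply: Af (gP (x + y)) (AD _ _ _ _ (gP x) (gP y)).
- by move=> t x; apply: Af (gP (rs t x)) (AZ _ _ _ (gP x)).
- by move=> x; apply: Ap (gP x).
- by move=> x a G0xa; apply: Af (gP x) (G0A _ G0xa).
Qed.

End HBext.
Section Gauge.
Variables (R : realType) (V : lmodType R[i]) (D : set V).
Hypothesis D0 : D 0.
Hypothesis Dconv : forall x y (l : R), 0 <= l -> l <= 1 -> D x -> D y ->
  D (rs l x + rs (1 - l) y).
Hypothesis Dabs : forall x, exists t : R, 0 < t /\ D (rs t^-1 x).

Definition GS x := [set t : R | 0 < t /\ D (rs t^-1 x)].
Definition gauge x := inf (GS x).

Lemma GSn x : GS x !=set0.
Proof. by have [t Ht] := Dabs x; exists t. Qed.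

Lemma GSlb x : has_lbound (GS x).
Proof. by exists 0 => t [t0 _]; exact: ltW. Qed.

Lemma gauge_ge0 x : 0 <= gauge x.
Proof. by apply: lb_le_inf; [exact: GSn|move=> t [t0 _]; exact: ltW]. Qed.

Lemma gauge_le x t : 0 < t -> D (rs t^-1 x) -> gauge x <= t.
Proof. by move=> t0 Dt; apply: ge_inf; [exact: GSlb|split]. Qed.

Lemma gauge_lt x u : gauge x < u -> D (rs u^-1 x).
Proof.
move=> /(inf_lt (GSn x))[t [t0 Dt] tu].
have u0 : 0 < u by apply: lt_trans tu.
have := Dconv _ _ (t / u) (ltW (divr_gt0 t0 u0)) _ Dt D0.
rewrite scaler0 addr0 rsA.
have -> : t / u * t^-1 = u^-1 by field; rewrite !gt_eqF.
apply; by rewrite ler_pdivrMr // mul1r ltW.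
Qed.

Lemma gauge_hom_le r x : 0 < r -> gauge (rs r x) <= r * gauge x.
Proof.
move=> r0; apply/ler_addgt0Pr => e e0.
have hu : gauge x < gauge x + e / r by rewrite ltrDl divr_gt0.
have := gauge_lt _ _ hu => Du.
have -> : r * gauge x + e = r * (gauge x + e / r) by field; rewrite gt_eqF.
apply: gauge_le; first by rewrite mulr_gt0 // (le_lt_trans (gauge_ge0 x) hu).
rewrite rsA.
suff -> : (r * (gauge x + e / r))^-1 * r = (gauge x + e / r)^-1 by [].
have := le_lt_trans (gauge_ge0 x) hu; move: (gauge x + e / r) => w w0.
by rewrite invfM mulrAC mulVf ?gt_eqF // mul1r.
Qed.

Lemma gauge_hom r x : 0 < r -> gauge (rs r x) = r * gauge x.
Proof.
move=> r0; apply/le_anti/andP; split; first exact: gauge_hom_le.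
have r0' : 0 < r^-1 by rewrite invr_gt0.
have := gauge_hom_le _ (rs r x) r0'.
rewrite rsA mulVf ?gt_eqF // rs1 => h.
by rewrite -ler_pdivlMl.
Qed.

Lemma gauge_add x y : gauge (x + y) <= gauge x + gauge y.
Proof.
apply/ler_addgt0Pr => e e0.
set s := gauge x + e / 2; set t := gauge y + e / 2.
have hs : gauge x < s by rewrite ltrDl divr_gt0.
have ht : gauge y < t by rewrite ltrDl divr_gt0.
have s0 : 0 < s := le_lt_trans (gauge_ge0 x) hs.
have t0 : 0 < t := le_lt_trans (gauge_ge0 y) ht.
have -> : gauge x + gauge y + e = s + t by rewrite /s /t; field.
apply: gauge_le; first exact: addr_gt0.
have st0 : 0 < s + t by exact: addr_gt0.
have := Dconv _ _ (s / (s + t)) (ltW (divr_gt0 s0 st0)) _ (gauge_lt _ _ hs) (gauge_lt _ _ ht).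
rewrite !rsA.
have -> : s / (s + t) * s^-1 = (s + t)^-1 by field; rewrite !gt_eqF.
have -> : (1 - s / (s + t)) * t^-1 = (s + t)^-1 by field; rewrite !gt_eqF.
rewrite -rsDr; apply.
by rewrite ler_pdivrMr // mul1r lerDl ltW.
Qed.

End Gauge.
Section SepAux.
Variables (R : realType) (V : tvsType R[i]).

Lemma posC (e : R[i]) : 0 < e -> exists a : R, 0 < a /\ e = (a%:C)%C.
Proof.
case: e => a b; rewrite ltcE /= => /andP[/eqP b0 a0]; exists a; split => //.
by rewrite b0.
Qed.

Lemma normRC (r : R) : `|(r%:C)%C| = (`|r|%:C)%C :> R[i].
Proof.
have z2 : (0:R) ^+ 2 = 0 by rewrite expr2 mulr0.
by rewrite normc_def /= z2 addr0 sqrtr_sqr.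
Qed.

Lemma convD (U : set V) : convex_set U -> forall x y (l : R), 0 <= l -> l <= 1 ->
  U x -> U y -> U (rs l x + rs (1 - l) y).
Proof.
move=> cU x y l l0 l1 Ux Uy.
have l0' : (0 : R[i]) <= (l%:C)%C by rewrite lecR.
have l1' : (l%:C)%C <= (1 : R[i]) by rewrite -(rmorph1 (real_complex R)) lecR.
have := cU x y (Itv01 l0' l1') (mem_set Ux) (mem_set Uy).
by rewrite inE rmorphB rmorph1.
Qed.

Lemma nbhs0_scale (c : R[i]) (W : set V) : c != 0 -> nbhs 0 W ->
  nbhs 0 [set z | W (c *: z)].
Proof.
move=> c0 W0; have := nbhs0Z (invr_neq0 c0) W0; apply: filterS => _ [w Ww <-].
by rewrite /= scalerA mulfV // scale1r.
Qed.

Lemma nbhs_sub (x : V) (W : set V) : nbhs 0 W -> nbhs x [set y | W (x - y)].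
Proof.
move=> W0; have := nbhsT x (nbhs0N W0); apply: filterS => _ [_ [w Ww <-] <-].
by rewrite /= opprD addrA subrr add0r opprK.
Qed.

Lemma absorb (U : set V) : nbhs 0 U -> forall x, exists t : R, 0 < t /\ U (rs t^-1 x).
Proof.
move=> U0 x.
have H : nbhs ((0 : R[i]^o), x) [set z | U (z.1 *: z.2)].
  have := @scale_continuous _ V (0, x) U; rewrite /= scale0r; apply; exact: U0.
case: H => [[A B]] /= [nA nB] AB.
have [e e0 eA] := (nbhs_ballP _ _).1 nA.
have [a [a0 ea]] := @posC e e0.
exists (2 / a); split; first by rewrite divr_gt0.
apply: (AB ((((2 / a)^-1)%:C)%C, x)); split => //=; last exact: nbhs_singleton.
apply: eA; rewrite -ball_normE /= sub0r normrN normRC ea ltcR invf_div.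
rewrite ger0_norm ?divr_ge0 ?ltW //.
by rewrite ltr_pdivrMr // ltr_pMr // ltr1n.
Qed.

End SepAux.
Lemma alg2 (K : comRingType) (i a b g1 g2 h1 h2 : K) : i * i = -1 ->
  (a*g1 + b*g2 + h1) - i*(a*g2 + b*(-g1) + h2) = (a + i*b) * (g1 - i*g2) + (h1 - i*h2).
Proof.
move=> hi.
have -> : b * g2 = - (i * i) * b * g2 by rewrite hi; ring.
ring.
Qed.

Section FC.
Variables (R : realType) (V : lmodType R[i]) (g : V -> R).
Hypothesis gD : forall x y, g (x + y) = g x + g y.
Hypothesis gZ : forall (t : R) x, g (rs t x) = t * g x.

Definition fC x : R[i] := ((g x)%:C)%C - 'i%C * ((g ('i%C *: x))%:C)%C.

Lemma gN x : g (- x) = - g x.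
Proof. by rewrite -rsN1 gZ mulN1r. Qed.

Lemma gZc a x : g (a *: x) = complex.Re a * g x + complex.Im a * g ('i%C *: x).
Proof.
rewrite {1}[a]complexE scalerDl gD gZ; congr (_ + _).
by rewrite mulrC -scalerA gZ.
Qed.

Lemma fC_lin : linear_for *%R fC.
Proof.
move=> a x y; rewrite /fC scalerDr !gD.
have -> : 'i%C *: (a *: x) = a *: ('i%C *: x) by rewrite !scalerA mulrC.
rewrite (gZc a x) (gZc a ('i%C *: x)) scalerA.
have hi : 'i%C * 'i%C = -1 :> R[i] by rewrite -expr2 sqr_i.
rewrite hi scaleN1r gN.
rewrite !rmorphD !rmorphM rmorphN alg2 // -complexE.
by [].
Qed.
End FC.

Lemma normi (R : realType) : `|'i%C| = 1 :> R[i].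
Proof.
have z2 : (0:R) ^+ 2 = 0 by rewrite expr2 mulr0.
by rewrite normc_def /= z2 expr1n add0r sqrtr1.
Qed.
Lemma sep (R : realType) (V : tvsType R[i]) (L : set V) (v : V) :
  L 0 -> (forall a x y, L x -> L y -> L (a *: x + y)) -> ~ closure L v ->
  exists f : {scalar V}, continuous (f : V -> Ctop R) /\
    (forall l, L l -> f l = 0) /\ f v != 0.
Proof.
move=> L0 Llin ncl.
have [B [Bv nLB]] : exists B, nbhs v B /\ forall l, L l -> ~ B l.
  apply: contrapT => h; apply: ncl => B Bv; apply: contrapT => nh; apply: h.
  by exists B; split => // l Ll Bl; apply: nh; exists l.
have N0 : nbhs 0 [set d | B (v - d)].
  have h1 := nbhsB (- v) Bv; rewrite addNr in h1.
  have := nbhs0N h1; apply: filterS => _ [_ [b Bb <-] <-] /=.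
  by rewrite opprK addrA subrr add0r.
have [Bs Bconv [Bopen Bbas]] := @locally_convex _ V.
have [U [BsU U0] UN] := Bbas 0 _ N0.
have Un : nbhs 0 U by apply: open_nbhs_nbhs; split => //; exact: Bopen.
have cU : convex_set U := Bconv _ (mem_set BsU).
have Dconv := convD _ _ _ cU.
have Dabs := absorb _ _ _ Un.
pose p := gauge _ _ U.
have p_add : forall x y, p (x + y) <= p x + p y := gauge_add _ _ _ U0 Dconv Dabs.
have p_hom : forall (t : R) x, 0 < t -> p (rs t x) = t * p x :=
  gauge_hom _ _ _ U0 Dconv Dabs.
have p_ge0 : forall x, 0 <= p x := gauge_ge0 _ _ _ Dabs.
have vL : ~ L v by move=> Lv; apply: (nLB v Lv); exact: nbhs_singleton Bv.
have Lsc c l : L l -> L (c *: l) by move=> Ll; rewrite -[c *: l]addr0; exact: Llin.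
have LD x y : L x -> L y -> L (x + y).
  by move=> Lx Ly; rewrite -[x]scale1r; exact: Llin.
have LB x y : L x -> L y -> L (x - y).
  by move=> Lx Ly; rewrite -scaleN1r addrC; exact: Llin.
pose G0 := [set e : V * R | exists l t, L l /\ e.1 = l + rs t v /\ e.2 = t].
have QG0 : Qg _ _ p G0.
  split.
  - move=> x a b [l [t [Ll /= [-> ->]]]] [l' [t' [Ll' /= [ex ->]]]].
    apply: contrapT => /eqP; rewrite -subr_eq0 => tt0; apply: vL.
    have : L (rs (t - t') v).
      rewrite -rsD rsNl.
      have -> : rs t v - rs t' v = l' - l.
        have -> : l' = l + rs t v - rs t' v by rewrite ex addrK.
        by rewrite addrAC [l + _]addrC addrK.
      exact: LB.
    move/(Lsc ((t - t')^-1%:C)%C); by rewrite rsA mulVf // rs1.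
  - move=> x a y b [l [t [Ll /= [-> ->]]]] [l' [t' [Ll' /= [-> ->]]]].
    exists (l + l'), (t + t'); split; first exact: LD.
    by split => //=; rewrite -rsD addrACA.
  - move=> s x a [l [t [Ll /= [-> ->]]]].
    exists (rs s l), (s * t); split; first exact: Lsc.
    by split => //=; rewrite rsDr rsA.
  - move=> x a [l [t [Ll /= [-> ->]]]].
    case: (leP t 0) => [t0|t0]; first exact: le_trans t0 (p_ge0 _).
    rewrite leNgt; apply/negP => pt.
    have := gauge_lt _ _ _ U0 Dconv Dabs _ _ pt.
    rewrite rsDr rsA mulVf ?gt_eqF // rs1 => /UN /=.
    rewrite opprD addrCA subrr addr0; apply: nLB.
    by rewrite -scaleN1r; exact: (Lsc _ _ (Lsc _ _ Ll)).
have G0n : G0 !=set0 by exists (0, 0), 0, 0; split => //=; rewrite rs0 addr0.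
have [g [gD gZ gp gG0]] := hb_ext _ _ _ p_add p_hom _ QG0 G0n.
have gL l : L l -> g l = 0.
  move=> Ll; apply: (gG0 l 0); exists l, 0; split => //=; by rewrite rs0 addr0.
pose F : {scalar V} := HB.pack (fC _ _ g) (GRing.isLinear.Build _ _ _ _ (fC _ _ g) (fC_lin _ _ _ gD gZ)).
have FE x : F x = fC _ _ g x by reflexivity.
exists F; split; last split.
- move=> x; apply/cvgrPdist_le => e e0.
  have [a [a0 ->]] := posC _ _ e0.
  have gnear (eps : R) : 0 < eps -> nbhs (0 : V) [set z | `|g z| <= eps].
    move=> eps0.
    have ne : ((eps^-1)%:C)%C != 0 :> R[i].
      by rewrite fmorph_eq0 invr_eq0 gt_eqF.
    have W1 := nbhs0_scale _ _ _ _ ne Un.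
    have ne2 : - ((eps^-1)%:C)%C != 0 :> R[i] by rewrite oppr_eq0.
    have W2 := nbhs0_scale _ _ _ _ ne2 Un.
    apply: filterS2 W1 W2 => z /= h1 h2.
    have l1 : g z <= eps := le_trans (gp z) (gauge_le _ _ _ _ _ eps0 h1).
    rewrite scaleNr -scalerN in h2.
    have l2 : g (- z) <= eps := le_trans (gp (- z)) (gauge_le _ _ _ _ _ eps0 h2).
    rewrite (gN _ _ _ gZ) in l2.
    by rewrite ler_norml l1 andbT lerNl.
  have a20 : 0 < a / 2 by rewrite divr_gt0.
  have inz : 'i%C != 0 :> R[i] by rewrite -normr_eq0 normi oner_eq0.
  have H1 := nbhs_sub _ _ x _ (gnear _ a20).
  have H2 := nbhs_sub _ _ x _ (nbhs0_scale _ _ _ _ inz (gnear _ a20)).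
  apply: filterS2 H1 H2 => y /= h1 h2.
  have fCB : fC R V g (x - y) = fC R V g x - fC R V g y.
    by rewrite addrC -scaleN1r (fC_lin _ _ _ gD gZ) mulN1r addrC.
  rewrite -fCB /fC.
  apply: le_trans (ler_normB _ _) _.
  rewrite normrM normi mul1r !normRC -rmorphD lecR.
  rewrite [X in _ <= X](splitr a); exact: lerD h1 h2.
- move=> l Ll; rewrite FE /fC gL // gL; last exact: Lsc.
  by rewrite rmorph0 mulr0 subr0.
- rewrite FE /fC.
  have -> : g v = 1.
    apply: (gG0 v 1); exists 0, 1; split => //=; by rewrite rs1 add0r.
  set b := g _; apply/eqP => h.
  have h1 : (1 : R[i]) = 'i%C * ((b%:C)%C).
    by apply/eqP; rewrite -subr_eq0 -(rmorph1 (real_complex R)) h.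
  have : (((1 + b ^+ 2)%:C)%C : R[i]) = 0.
    rewrite rmorphD rmorph1 rmorphXn.
    have -> : (1 : R[i]) = ('i%C * (b%:C)%C) ^+ 2 by rewrite -h1 expr1n.
    by rewrite exprMn sqr_i mulN1r addNr.
  move/eqP; rewrite fmorph_eq0 => /eqP hb.
  have : 0 < 1 + b ^+ 2 by apply: (lt_le_trans ltr01); rewrite lerDl sqr_ge0.
  by rewrite hb ltxx.
Qed.
From mathcomp Require Import zify.
Lemma cnt_eq (P Q j : nat) : (P <= Q)%N ->
  (\sum_(P <= k < Q) (k < j)%N)%N = (minn Q j - minn P j)%N.
Proof.
elim: Q => [|Q IH] PQ.
  rewrite big_geq //; lia.
move: PQ; rewrite leq_eqVlt => /orP[/eqP ->|]; first by rewrite big_geq // subnn.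
rewrite ltnS => PQ.
rewrite big_nat_recr //= IH //; case: (ltnP Q j) => Qj /=; lia.
Qed.

Lemma cnt_bound (P Q j : nat) : (P < Q)%N -> (j <= Q)%N ->
  ((minn Q j - minn P j) * Q <= j * (Q - P))%N.
Proof.
move=> PQ jQ; have -> : minn Q j = j by lia.
case: (leqP P j) => Pj; nia.
Qed.
Lemma d_cvg (R : realType) (p q : nat -> nat) (j : nat) :
  (forall n, (p n < q n)%N) ->
  (forall M : nat, exists N : nat, forall n, (N <= n)%N -> (M <= q n)%N) ->
  (fun n => ((((q n - p n)%:R)^-1 * \sum_(p n <= k < q n) ((j < k.+1)%N)%:R : R[i])
     : R[i]^o)) @ \oo --> (1 : R[i]^o).
Proof.
move=> pq qinf; apply/cvgrPdist_le => e e0.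
have [a [a0 ->]] := posC _ _ e0.
have ja0 : 0 <= j%:R / a :> R by rewrite divr_ge0 // ltW.
have [N HN] := qinf (maxn (Num.Def.archi_bound (j%:R / a)) j).
apply: filterS (nbhs_infty_ge N) => n /= Nn.
have := HN n Nn; rewrite geq_max => /andP[Mq jq].
have PQ := pq n.
move: Mq jq PQ; move: (p n) (q n) => P Q Mq jq PQ.
have QP0 : (0 < Q - P)%N by rewrite subn_gt0.
have sum_eq : \sum_(P <= k < Q) ((j < k.+1)%N)%:R =
    ((Q - P)%:R - (\sum_(P <= k < Q) (k < j)%N)%:R : R[i]).
  rewrite natr_sum -sumr_const_nat -sumrB; apply: eq_bigr => k _.
  by rewrite ltnS; case: leqP => /= _; rewrite ?subr0 ?subrr.
rewrite sum_eq cnt_eq; last exact: ltnW.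
have hc := cnt_bound _ _ _ PQ jq.
move: hc; move: (minn Q j - minn P j)%N => c hc.
have -> : 1 - ((Q - P)%:R)^-1 * ((Q - P)%:R - c%:R) = c%:R / (Q - P)%:R :> R[i].
  have d0 : ((Q - P)%:R : R[i]) != 0 by rewrite pnatr_eq0 -lt0n.
  by rewrite mulrBr mulVf // opprB addrC subrK mulrC.
rewrite ger0_norm ?divr_ge0 ?ler0n //.
rewrite -!(rmorph_nat (real_complex R)) -fmorph_div lecR.
rewrite ler_pdivrMr ?ltr0n //.
have h1 : (c%:R * Q%:R <= j%:R * (Q - P)%:R :> R) by rewrite -!natrM ler_nat.
have h2 : (j%:R <= a * Q%:R :> R).
  have := archi_boundP ja0; rewrite ltr_pdivrMr // => h.
  apply: le_trans (ltW h) _; rewrite mulrC ler_pM2l // ler_nat.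
  exact: Mq.
have h3 : (0 < Q%:R :> R) by rewrite ltr0n; exact: leq_ltn_trans (leq0n P) PQ.
have h4 : (0 <= (Q - P)%:R :> R) by rewrite ler0n.
move: h1 h2 h3 h4; move: (c%:R : R) (Q%:R : R) ((Q - P)%:R : R) (j%:R : R) => C QQ D J.
move=> h1 h2 h3 h4; nra.
Qed.
Section TvsCvg.
Variables (R : realType) (V : tvsType R[i]).

Lemma tvs_cvgD (a b : nat -> V) (la lb : V) : a @ \oo --> la -> b @ \oo --> lb ->
  (fun n => a n + b n) @ \oo --> la + lb.
Proof.
move=> ha hb.
have hc := @add_continuous V (la, lb).
have hp : (fun n => (a n, b n)) @ \oo --> (la, lb) by exact: cvg_pair.
exact: (cvg_comp _ _ hp hc).
Qed.

Lemma tvs_cvgZ (s : nat -> R[i]) (w : V) (c : R[i]) :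
  (fun n => (s n : R[i]^o)) @ \oo --> (c : R[i]^o) ->
  (fun n => s n *: w) @ \oo --> c *: w.
Proof.
move=> hs.
have hc := @scale_continuous _ V (c, w).
have hp : (fun n => ((s n : R[i]^o), w)) @ \oo --> ((c : R[i]^o), w).
  exact: (cvg_pair hs (cvg_cst w)).
exact: (cvg_comp _ _ hp hc).
Qed.

Lemma tvs_cvg_sum N (F : nat -> nat -> V) (l : nat -> V) :
  (forall j, (fun n => F n j) @ \oo --> l j) ->
  (fun n => \sum_(j < N) F n j) @ \oo --> \sum_(j < N) l j.
Proof.
elim: N => [|N IH] h.
  rewrite big_ord0; under eq_fun do rewrite big_ord0; exact: cvg_cst.
rewrite big_ord_recr /=; under eq_fun do rewrite big_ord_recr /=.
exact: tvs_cvgD (IH h) (h N).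
Qed.
End TvsCvg.
Section Aux.
Variable R : realType.

Lemma sum_delta (c : nat -> R[i]) (N i : nat) :
  \sum_(j < N) c j * delta R j i = if (i < N)%N then c i else 0.
Proof.
elim: N => [|N IH]; first by rewrite big_ord0.
rewrite big_ord_recr /= IH /delta ltnS [(i <= N)%N]leq_eqVlt.
case: (eqVneq i N) => [->|iN] /=; first by rewrite ltnn mulr1 add0r.
by rewrite mulr0 addr0.
Qed.

Lemma phiP (x : wseq R) : phi R x <-> exists N, forall i, (N <= i)%N -> x i = 0.
Proof.
split.
  case=> N [c Hc]; exists N => i Ni; rewrite Hc sum_delta.
  by rewrite ltnNge Ni.
case=> N HN; exists N, x => i; rewrite sum_delta.
by case: ltnP => // /HN.
Qed.

Lemma Tn_phi (p q : nat -> nat) n x : phi R (Tn p q n x).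
Proof.
apply/phiP; exists (q n) => i qi; rewrite /Tn big1_seq ?mulr0 //.
move=> k /andP[_]; rewrite mem_index_iota => /andP[_ kq]; rewrite /section.
by rewrite ltnNge (leq_trans kq qi).
Qed.

End Aux.
Section Main.
Variables (R : realType) (V : tvsType R[i]) (iota : V -> wseq R).
Hypothesis iota_lin : forall (a : R[i]) (u v : V) (i : nat),
  iota (a *: u + v) i = a * iota u i + iota v i.

Lemma iota0 : iota 0 = 0.
Proof.
apply/funext => i; have := iota_lin 1 0 0 i.
rewrite scaler0 addr0 mul1r -{1}[iota 0 i]addr0 => /addrI <- //.
Qed.

Lemma iotaD u v i : iota (u + v) i = iota u i + iota v i.
Proof. by have := iota_lin 1 u v i; rewrite scale1r mul1r. Qed.

Lemma iotaZ a u i : iota (a *: u) i = a * iota u i.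
Proof. by have := iota_lin a u 0 i; rewrite addr0 iota0 addr0. Qed.

Lemma L0 : (iota @^-1` phi R) 0.
Proof. by rewrite /preimage /= iota0; apply/phiP; exists 0%N. Qed.

Lemma Llin a x y : (iota @^-1` phi R) x -> (iota @^-1` phi R) y ->
  (iota @^-1` phi R) (a *: x + y).
Proof.
rewrite /preimage /= => /phiP[N HN] /phiP[M HM]; apply/phiP; exists (maxn N M).
move=> i; rewrite geq_max => /andP[Ni Mi]; by rewrite iota_lin HN ?HM ?mulr0 ?addr0.
Qed.

Lemma iota_sum N (c : nat -> R[i]) (w : nat -> V) i :
  iota (\sum_(j < N) c j *: w j) i = \sum_(j < N) c j * iota (w j) i.
Proof.
elim: N => [|N IH]; first by rewrite !big_ord0 iota0.
by rewrite !big_ord_recr /= iotaD iotaZ IH.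
Qed.

End Main.
Lemma phi_DS (R : realType) (V : tvsType R[i]) (iota : V -> wseq R)
    (p q : nat -> nat) :
  FKspace iota ->
  phi R `<=` inX iota ->
  (forall n, (p n < q n)%N) ->
  (forall M : nat, exists N : nat, forall n, (N <= n)%N -> (M <= q n)%N) ->
  phi R `<=` DS iota p q.
Proof.
move=> FK phiX pq qinf x /phiP [N HN].
have [_ ilin _ _] := FK.
have dphi j : phi R (delta R j).
  apply/phiP; exists j.+1 => i ji; by rewrite /delta gtn_eqF.
have ex_e j : exists w, iota w = delta R j.
  by have [w _ <-] := phiX _ (dphi j); exists w.
pose e j := projT1 (cid (ex_e j)).
have eE j : iota (e j) = delta R j by rewrite /e; case: cid.
pose d n j : R[i] := ((q n - p n)%:R)^-1 * \sum_(p n <= k < q n) ((j < k.+1)%N)%:R.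
exists (\sum_(j < N) x j *: e j), (fun n => \sum_(j < N) d n j *: (x j *: e j)).
split; [|split].
- apply/funext => i; rewrite (iota_sum _ _ _ ilin).
  under eq_bigr do rewrite eE.
  by rewrite sum_delta; case: ltnP => // /HN ->.
- move=> n; apply/funext => i.
  rewrite (iota_sum _ _ _ ilin N (d n) (fun j => x j *: e j)).
  under eq_bigr do rewrite (iotaZ _ _ _ ilin) eE mulrA.
  rewrite (sum_delta _ (fun j => d n j * x j)) /Tn.
  have -> : \sum_(p n <= k < q n) section k.+1 x i =
      (\sum_(p n <= k < q n) ((i < k.+1)%N)%:R) * x i.
    rewrite mulr_suml; apply: eq_bigr => k _; rewrite /section.
    by case: (i < k.+1)%N => /=; rewrite ?mul1r ?mul0r.
  case: ltnP => iN; first by rewrite mulrA.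
  by rewrite (HN i iN) !mulr0.
- have h : (fun n => \sum_(j < N) d n j *: (x j *: e j)) @ \oo -->
      \sum_(j < N) 1 *: (x j *: e j).
    apply: (tvs_cvg_sum _ _ N (fun n j => d n j *: (x j *: e j)) (fun j => 1 *: (x j *: e j))) => j.
    apply: (tvs_cvgZ _ _ (fun n => d n j)); exact: (d_cvg _ _ _ _ pq qinf).
  suff <- : \sum_(j < N) 1 *: (x j *: e j) = \sum_(j < N) x j *: e j by [].
  by apply: eq_bigr => j _; rewrite scale1r.
Qed.

Theorem mainTheorem6 (R : realType) (V : tvsType R[i]) (iota : V -> wseq R)
    (p q : nat -> nat) :
  FKspace iota ->
  phi R `<=` inX iota ->
  (forall n, (p n < q n)%N) ->
  (forall M : nat, exists N : nat, forall n, (N <= n)%N -> (M <= q n)%N) ->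
  [/\ phi R `<=` DS iota p q /\ DS iota p q `<=` DW iota p q,
      DW iota p q `<=` DF iota p q,
      DF iota p q `<=` DB iota p q,
      DB iota p q `<=` inX iota &
      DW iota p q `<=` phi_closure iota].
Proof.
move=> FK phiX pq qinf.
have [_ ilin _ _] := FK.
split.
- split; first exact: phi_DS.
  move=> x [v [u [vx [ux uv]]]]; exists v, u; split; first exact: vx.
  split; first exact: ux.
  move=> f fc; exact: (continuous_cvg _ (fc v) uv).
- move=> x [v [u [vx [ux Hf]]]]; split; last by exists v.
  exists u; split; first exact: ux.
  move=> f fc; exact: (cvgP _ (Hf f fc)).
- move=> x [[u [ux Hf]] xX]; split; last exact: xX.
  exists u; split; first exact: ux.
  move=> f fc; move: (Hf f fc) => /cvg_seq_bounded.
  case=> M [Mr HM]; exists (M+1) => n; apply: (HM (M+1)) => //; by rewrite ltrDl.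
- by move=> x [].
- move=> x [v [u [vx [ux Hf]]]]; exists v; last exact: vx.
  apply: contrapT => ncl.
  have [f [fc [fL fv]]] := @sep R V _ v (@L0 _ _ _ ilin) (@Llin _ _ _ ilin) ncl.
  have uL n : (iota @^-1` phi R) (u n) by rewrite /preimage /= ux; exact: Tn_phi.
  have H0 : (fun n => (f (u n) : Ctop R)) @ \oo --> (0 : Ctop R).
    by apply: cvg_near_cst; near=> n; rewrite fL.
  move/negP: fv; apply; apply/eqP.
  exact: (cvg_unique _ (Hf f fc) H0).
Unshelve. all: by end_near.
Qed.
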